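(* Let $\mathcal{H}$ be a complex Hilbert space and $T,W\in\mathcal{B}(\mathcal{H})$ with $W\geq0$. Then there exist $T_{lr},T_{ls}\in\mathcal{B}(\mathcal{H})$ such that $T=T_{lr}+T_{ls}$, $T_{lr}$ is $W$-left regular and $T_{ls}$ is $W$-left strongly singular.
   Context: $\mathcal{B}(\mathcal{H})$ is the set of bounded everywhere defined operators on $\mathcal{H}$; $S\geq0$ means $\langle Sf,f\rangle\geq0$ for all $f$. For non-negative $S,W\in\mathcal{B}(\mathcal{H})$: $S$ is $W$-absolutely continuous if $\langle Wf_n,f_n\rangle\to0$ and $\langle S(f_n-f_m),f_n-f_m\rangle\to0$ imply $\langle Sf_n,f_n\rangle\to0$; $S$ is $W$-singular if the only $Q\in\mathcal{B}(\mathcal{H})$ with $0\leq Q\leq S$ and $0\leq Q\leq W$ is $Q=0$. $M_l(T)$ is the set of non-negative $S_1\in\mathcal{B}(\mathcal{H})$ for which there is a non-negative $S_2\in\mathcal{B}(\mathcal{H})$ with $|\langle Tf,g\rangle|\leq\langle S_1f,f\rangle^{1/2}\langle S_2g,g\rangle^{1/2}$ for all $f,g\in\mathcal{H}$. $T$ is $W$-left regular if some $S_1\in M_l(T)$ is $W$-absolutely continuous, and $W$-left strongly singular if some $S_1\in M_l(T)$ is $W$-singular. *)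

(* Defs.v *)
(* Complex scalars: R[i] for R : realType (real_closed/complex),
   which carries the numClosedFieldType structure (order, norm, conjugation, sqrtC). *)
From mathcomp Require Import all_boot all_order all_algebra.
From mathcomp Require Import reals complex.
Set Implicit Arguments.
Unset Strict Implicit.
Unset Printing Implicit Defensive.
Import Order.TTheory GRing.Theory Num.Theory.
Local Open Scope ring_scope.

Section Hilbert.
Variable R : realType.
Local Notation C := (R[i]).
Variable H : lmodType C.
Variable ip : H -> H -> C.

Definition hnorm (x : H) : C := sqrtC (ip x x).

Definition is_hilbert : Prop :=
  [/\ (forall (a : C) (x y z : H), ip (a *: x + y) z = a * ip x z + ip y z),
      (forall x y : H, ip x y = (ip y x)^*),
      (forall x : H, 0 <= ip x x),
      (forall x : H, ip x x = 0 -> x = 0) &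
      (forall u : nat -> H,
         (forall e : C, 0 < e -> exists N : nat, forall m n : nat,
            (N <= m)%N -> (N <= n)%N -> hnorm (u m - u n) < e) ->
         exists l : H, forall e : C, 0 < e -> exists N : nat, forall n : nat,
            (N <= n)%N -> hnorm (u n - l) < e)].

Definition bounded (T : H -> H) : Prop :=
  exists M : C, forall f : H, hnorm (T f) <= M * hnorm f.

Definition in_BH (T : {linear H -> H}) : Prop := bounded T.

Definition nonneg_op (S : {linear H -> H}) : Prop :=
  forall f : H, 0 <= ip (S f) f.

Definition seq_to0 (a : nat -> C) : Prop :=
  forall e : C, 0 < e -> exists N : nat, forall n : nat, (N <= n)%N -> `|a n| < e.

Definition dseq_to0 (a : nat -> nat -> C) : Prop :=
  forall e : C, 0 < e -> exists N : nat, forall n m : nat,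
    (N <= n)%N -> (N <= m)%N -> `|a n m| < e.

Definition abs_cont (W S : {linear H -> H}) : Prop :=
  forall f : nat -> H,
    seq_to0 (fun n => ip (W (f n)) (f n)) ->
    dseq_to0 (fun n m => ip (S (f n - f m)) (f n - f m)) ->
    seq_to0 (fun n => ip (S (f n)) (f n)).

Definition singular (W S : {linear H -> H}) : Prop :=
  forall Q : {linear H -> H}, in_BH Q ->
    nonneg_op Q -> (forall f, ip (Q f) f <= ip (S f) f) ->
    (forall f, ip (Q f) f <= ip (W f) f) ->
    forall f, Q f = 0.

Definition in_Ml (T S1 : {linear H -> H}) : Prop :=
  [/\ in_BH S1, nonneg_op S1 &
    exists S2 : {linear H -> H}, [/\ in_BH S2, nonneg_op S2 &
      forall f g : H, `|ip (T f) g| <= sqrtC (ip (S1 f) f) * sqrtC (ip (S2 g) g)]].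

Definition left_regular (W T : {linear H -> H}) : Prop :=
  exists S1 : {linear H -> H}, in_Ml T S1 /\ abs_cont W S1.

Definition left_strongly_singular (W T : {linear H -> H}) : Prop :=
  exists S1 : {linear H -> H}, in_Ml T S1 /\ singular W S1.

End Hilbert.

(* Main.v *)
From HB Require Import structures.
Require Import Defs.
From mathcomp Require Import all_boot all_order all_algebra.
From mathcomp Require Import reals complex.
From mathcomp Require Import boolp classical_sets.
From mathcomp Require Import ring.
Set Implicit Arguments.
Unset Strict Implicit.
Unset Printing Implicit Defensive.
Import Order.TTheory GRing.Theory Num.Theory.
Local Open Scope ring_scope.

Section Basic.
Variable R : realType.
Local Notation C := (R[i]).
Variable H : lmodType C.
Variable ip : H -> H -> C.
Hypothesis hH : is_hilbert ip.

Lemma ip_lin a x y z : ip (a *: x + y) z = a * ip x z + ip y z.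
Proof. by move: hH; rewrite /is_hilbert => -[h _ _ _ _]; apply: h. Qed.
Lemma ipC x y : ip x y = (ip y x)^*.
Proof. by move: hH; rewrite /is_hilbert => -[_ h _ _ _]; apply: h. Qed.
Lemma ip_ge0 x : 0 <= ip x x.
Proof. by move: hH; rewrite /is_hilbert => -[_ _ h _ _]; apply: h. Qed.
Lemma ip_eq0 x : ip x x = 0 -> x = 0.
Proof. by move: hH; rewrite /is_hilbert => -[_ _ _ h _]; apply: h. Qed.

Lemma ip0l z : ip 0 z = 0.
Proof.
have := ip_lin 1 0 0 z; rewrite scaler0 addr0 mul1r => /eqP.
by rewrite -subr_eq subrr eq_sym => /eqP.
Qed.
Lemma ipDl x y z : ip (x + y) z = ip x z + ip y z.
Proof. by rewrite -[x in LHS]scale1r ip_lin mul1r. Qed.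
Lemma ipZl a x z : ip (a *: x) z = a * ip x z.
Proof. by rewrite -[a *: x]addr0 ip_lin ip0l addr0. Qed.
Lemma ipNl x z : ip (- x) z = - ip x z.
Proof. by rewrite -scaleN1r ipZl mulN1r. Qed.
Lemma ipBl x y z : ip (x - y) z = ip x z - ip y z.
Proof. by rewrite ipDl ipNl. Qed.
Lemma ip0r z : ip z 0 = 0.
Proof. by rewrite ipC ip0l conjC0. Qed.
Lemma ipDr x y z : ip z (x + y) = ip z x + ip z y.
Proof. by rewrite [ip z x]ipC [ip z y]ipC ipC ipDl rmorphD. Qed.
Lemma ipZr a x z : ip z (a *: x) = a^* * ip z x.
Proof. by rewrite [ip z x]ipC ipC ipZl rmorphM. Qed.
Lemma ipNr x z : ip z (- x) = - ip z x.
Proof. by rewrite [ip z x]ipC ipC ipNl rmorphN. Qed.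
Lemma ipBr x y z : ip z (x - y) = ip z x - ip z y.
Proof. by rewrite ipDr ipNr. Qed.
Lemma ip_real x : ip x x \is Num.real.
Proof. exact: ger0_real (ip_ge0 x). Qed.
Lemma ip_conj x : (ip x x)^* = ip x x.
Proof. exact: conj_Creal (ip_real x). Qed.

Lemma hnorm_ge0 x : 0 <= hnorm ip x.
Proof. by rewrite sqrtC_ge0 ip_ge0. Qed.
Lemma hnormK x : hnorm ip x ^+ 2 = ip x x.
Proof. exact: sqrtCK. Qed.

Lemma form_expand (F : H -> H -> C)
  (FDl : forall x y z, F (x + y) z = F x z + F y z)
  (FZl : forall a x z, F (a *: x) z = a * F x z)
  (FDr : forall x y z, F z (x + y) = F z x + F z y)
  (FZr : forall a x z, F z (a *: x) = a^* * F z x) x y c :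
  F (x + c *: y) (x + c *: y) = F x x + c^* * F x y + c * F y x + c * c^* * F y y.
Proof.
rewrite FDl !FDr !FZl !FZr; ring.
Qed.

Lemma ip_expand x y c :
  ip (x + c *: y) (x + c *: y) = ip x x + c^* * ip x y + c * ip y x + c * c^* * ip y y.
Proof. exact: form_expand ipDl ipZl ipDr ipZr x y c. Qed.

Lemma CS x y : `|ip x y| <= hnorm ip x * hnorm ip y.
Proof.
have [->|y0] := eqVneq y 0; first by rewrite ip0r normr0 mulr_ge0 ?hnorm_ge0.
set v := ip y y; set z := ip x y.
have v0 : v != 0 by apply/eqP => /ip_eq0; apply/eqP.
have vgt : 0 < v by rewrite lt_def v0 ip_ge0.
have := ip_ge0 (x + (- (z / v)) *: y).
have cj : (- (z / v))^* = - (z^* / v).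
  by rewrite rmorphN rmorphM fmorphV /= [v^*]ip_conj.
rewrite ip_expand -/v (ipC y x) -/z cj => h.
have : 0 <= ip x x * v - z * z^*.
  have -> : ip x x * v - z * z^* =
     (ip x x + - (z^* / v) * z + - (z / v) * z^* + - (z / v) * - (z^* / v) * v) * v.
    by field.
  by rewrite mulr_ge0 // ltW.
rewrite subr_ge0 -normCK => h2.
rewrite -(ler_pXn2r (n:=2)) // ?nnegrE ?mulr_ge0 ?hnorm_ge0 //.
by rewrite exprMn !hnormK.
Qed.


Lemma lin_zero (c0 s : C) :
  (forall r : C, r \is Num.real -> 0 <= c0 + r * s) -> s = 0.
Proof.
move=> h.
have h0 := h 0 (real0 _); rewrite mul0r addr0 in h0.
have h1 := h 1 (real1 _); rewrite mul1r in h1.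
have sr : s \is Num.real.
  have -> : s = (s + c0) - c0 by rewrite addrK.
  by apply: realB; [rewrite addrC|]; exact: ger0_real.
apply/eqP; apply/negPn/negP => s0.
have rr : - (c0 + 1) / s \is Num.real.
  apply: realM; last by rewrite realV.
  by rewrite realN; apply: realD; [exact: ger0_real|exact: real1].
have := h _ rr.
have -> : c0 + - (c0 + 1) / s * s = -1 by field.
by rewrite oppr_ge0 ler10.
Qed.

Lemma quad_zero (s q : C) : 0 <= q ->
  (forall r : C, r \is Num.real -> 0 <= r * s + r ^+ 2 * q) -> s = 0.
Proof.
move=> q0 h.
have h1 := h 1 (real1 _); rewrite mul1r expr1n mul1r in h1.
have sr : s \is Num.real.
  rewrite -[s](addrK q); by apply: realB; exact: ger0_real.
have q1 : q + 1 != 0 by rewrite gt_eqF // ltr_wpDl.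
have tr : s / (q + 1) \is Num.real.
  apply: realM => //; rewrite realV; apply: realD; [exact: ger0_real|exact: real1].
have := h (- (s / (q + 1))); rewrite realN => /(_ tr).
have -> : - (s / (q + 1)) * s + (- (s / (q + 1))) ^+ 2 * q =
          - ((s / (q + 1)) * (s / (q + 1))^*).
  rewrite (conj_Creal tr); field; exact: q1.
rewrite oppr_ge0 => hle.
have : (s / (q + 1)) * (s / (q + 1))^* = 0.
  by apply/eqP; rewrite eq_le hle mul_conjC_ge0.
move/eqP; rewrite mul_conjC_eq0 mulf_eq0 invr_eq0 (negbTE q1) orbF.
by move/eqP.
Qed.

Lemma small_zero (c : C) : 0 <= c -> (forall e : C, 0 < e -> c < e) -> c = 0.
Proof.
move=> c0 h; apply/eqP/negPn/negP => cn0.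
have cp : 0 < c by rewrite lt_def cn0 c0.
by have := h c cp; rewrite ltxx.
Qed.

Lemma le_small (X d : C) : X - d \is Num.real ->
  (forall e : C, 0 < e -> X < d + e) -> X <= d.
Proof.
move=> xr h; rewrite -subr_le0.
case/orP: (xr) => // hge.
have [e0|en0] := eqVneq (X - d) 0; first by rewrite e0.
have ep : 0 < X - d by rewrite lt_def en0 hge.
by have := h _ ep; rewrite addrC subrK ltxx.
Qed.

Lemma polar_zero (u v : C) : u + v = 0 -> 'i * v - 'i * u = 0 -> v = 0.
Proof.
move=> h1; rewrite -mulrBr => /eqP; rewrite mulf_eq0 (negbTE (neq0Ci _)) /=.
rewrite subr_eq0 => /eqP vu; move: h1; rewrite vu => /eqP.
by rewrite -mulr2n -mulr_natr mulf_eq0 pnatr_eq0 orbF => /eqP.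
Qed.

Lemma Sform_expand (S : {linear H -> H}) x y c :
  ip (S (x + c *: y)) (x + c *: y) =
  ip (S x) x + c^* * ip (S x) y + c * ip (S y) x + c * c^* * ip (S y) y.
Proof.
apply: (form_expand (F := fun u v => ip (S u) v)) => *.
- by rewrite /= linearD ipDl.
- by rewrite /= linearZ ipZl.
- by rewrite ipDr.
- by rewrite ipZr.
Qed.

Lemma conj_ri (r : C) : r \is Num.real -> (r * 'i)^* = r * - 'i.
Proof. by move=> hr; rewrite rmorphM /= conjCi (conj_Creal hr). Qed.

Lemma nullvec (S : {linear H -> H}) : nonneg_op ip S ->
  forall a, ip (S a) a = 0 -> S a = 0.
Proof.
move=> hS a ha.
suff hy : forall y, ip (S a) y = 0 by apply: ip_eq0; apply: hy.
move=> y.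
have e1 : ip (S y) a + ip (S a) y = 0.
  apply: (@lin_zero (ip (S y) y)) => r hr.
  have := hS (y + r *: a); rewrite Sform_expand ha mulr0 addr0 (conj_Creal hr).
  by rewrite mulrDr addrA.
have e2 : 'i * ip (S a) y - 'i * ip (S y) a = 0.
  apply: (@lin_zero (ip (S y) y)) => r hr.
  have := hS (y + (r * 'i) *: a); rewrite Sform_expand ha mulr0 addr0 (conj_ri hr).
  have -> : r * ('i * ip (S a) y - 'i * ip (S y) a) = r * - 'i * ip (S y) a + r * 'i * ip (S a) y by ring.
  by rewrite addrA; auto.
exact: (polar_zero e1 e2).
Qed.

Lemma selfadj (S : {linear H -> H}) : nonneg_op ip S ->
  forall a b, ip (S a) b = ip a (S b).
Proof.
move=> hS.
pose D u v := ip (S u) v - ip u (S v).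
have Dd : forall x, D x x = 0.
  move=> x; rewrite /D [ip x _]ipC (conj_Creal (ger0_real (hS x))) subrr //.
have DE : forall x y c, D (x + c *: y) (x + c *: y) =
    D x x + c^* * D x y + c * D y x + c * c^* * D y y.
  apply: form_expand => *; rewrite /D ?linearD ?linearZ ?ipDl ?ipDr ?ipZl ?ipZr; ring.
move=> a b; apply/eqP; rewrite -subr_eq0; apply/eqP.
have e1 : D b a + D a b = 0.
  have := DE a b 1; rewrite !Dd rmorph1 !mul1r addr0 add0r => h.
  by rewrite addrC h.
have e2 : 'i * D a b - 'i * D b a = 0.
  have := DE a b 'i; rewrite !Dd conjCi => h.
  have : - ('i * D a b - 'i * D b a) = 0 by rewrite [RHS]h; ring.
  by move/eqP; rewrite oppr_eq0 => /eqP.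
exact: (polar_zero e1 e2).
Qed.


Lemma ipNN v : ip (- v) (- v) = ip v v.
Proof. by rewrite ipNl ipNr opprK. Qed.

Lemma ip_swapB u v : ip (u - v) (u - v) = ip (v - u) (v - u).
Proof. by rewrite -opprB ipNN. Qed.

Lemma ipZZ c v : ip (c *: v) (c *: v) = c * c^* * ip v v.
Proof. by rewrite ipZl ipZr mulrA. Qed.

Lemma hn_lt v e : 0 < e -> (hnorm ip v < e) = (ip v v < e ^+ 2).
Proof.
move=> e0; rewrite -hnormK ltr_pXn2r // nnegrE ?hnorm_ge0 //; exact: ltW.
Qed.

Lemma hn_le v e : 0 <= e -> (hnorm ip v <= e) = (ip v v <= e ^+ 2).
Proof.
move=> e0; rewrite -hnormK ler_pXn2r // nnegrE ?hnorm_ge0 //.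
Qed.

Lemma ReJ_le (z : C) : z + z^* <= 2%:R * `|z|.
Proof.
have -> : z + z^* = 2%:R * 'Re z by rewrite ReE; field.
rewrite ler_pM2l ?ltr0n //.
apply: le_trans (real_ler_norm (Creal_Re z)) _.
exact: (leif_normC_Re_Creal z).1.
Qed.

Lemma ip_tri a b : ip (a + b) (a + b) <=
   ip a a + ip b b + 2%:R * (hnorm ip a * hnorm ip b).
Proof.
have := ip_expand a b 1; rewrite scale1r rmorph1 !mul1r => ->.
rewrite -!addrA lerD2l addrA addrC lerD2l (ipC b a).
apply: le_trans (ReJ_le _) _.
by rewrite ler_pM2l ?ltr0n // CS.
Qed.

Lemma paral a b : ip (a + b) (a + b) + ip (a - b) (a - b) = 2%:R * ip a a + 2%:R * ip b b.
Proof.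
rewrite !ipDl !ipDr !ipNl !ipNr; ring.
Qed.

Lemma bnd_sq (T : {linear H -> H}) : in_BH ip T ->
  exists2 m : C, 0 < m & forall f, ip (T f) (T f) <= m * ip f f.
Proof.
case=> M hM; exists (`|M| ^+ 2 + 1); first by rewrite ltr_wpDl ?exprn_ge0.
move=> f.
have h1 : hnorm ip (T f) <= `|M| * hnorm ip f.
  have h := hM f.
  have h0 : 0 <= M * hnorm ip f := le_trans (hnorm_ge0 _) h.
  by rewrite -(ger0_norm (hnorm_ge0 f)) -normrM ger0_norm.
have h2 : ip (T f) (T f) <= (`|M| * hnorm ip f) ^+ 2.
  by rewrite -hn_le // mulr_ge0 ?hnorm_ge0.
apply: (le_trans h2); rewrite exprMn hnormK ler_wpM2r ?ip_ge0 //.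
by rewrite lerDl ler01.
Qed.

Lemma bnd_abs (T : {linear H -> H}) : in_BH ip T ->
  exists2 m : C, 0 <= m & forall f, hnorm ip (T f) <= m * hnorm ip f.
Proof.
case=> M hM; exists `|M| => // f.
have h := hM f.
have h0 : 0 <= M * hnorm ip f := le_trans (hnorm_ge0 _) h.
by rewrite -(ger0_norm (hnorm_ge0 f)) -normrM ger0_norm.
Qed.

Lemma complete' (u : nat -> H) :
  (forall e : C, 0 < e -> exists N : nat, forall m n : nat,
     (N <= m)%N -> (N <= n)%N -> ip (u m - u n) (u m - u n) < e) ->
  exists l : H, forall e : C, 0 < e -> exists N : nat, forall n : nat,
     (N <= n)%N -> ip (u n - l) (u n - l) < e.
Proof.
move=> hc.
have hc5 : (forall e : C, 0 < e -> exists N : nat, forall m n : nat,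
            (N <= m)%N -> (N <= n)%N -> hnorm ip (u m - u n) < e).
  move=> e e0; have [N hN] := hc (e ^+ 2) (exprn_gt0 _ e0).
  by exists N => m n hm hn; rewrite hn_lt // hN.
have [l hl] : exists l : H, forall e : C, 0 < e -> exists N : nat, forall n : nat,
            (N <= n)%N -> hnorm ip (u n - l) < e.
  by move: hH; rewrite /is_hilbert => -[_ _ _ _ h]; apply: h.
exists l => e e0.
have s0 : 0 < sqrtC e by rewrite sqrtC_gt0.
have [N hN] := hl _ s0; exists N => n hn.
by have := hN n hn; rewrite hn_lt // sqrtCK.
Qed.

Lemma ge0_RC (z : C) : 0 <= z -> z = ((complex.Re z)%:C)%C.
Proof. by case: z => a b; rewrite lecE /= => /andP[/eqP -> _]. Qed.

Lemma archiC (e : C) : 0 < e -> exists N : nat, (N.+1%:R : C)^-1 < e.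
Proof.
move=> e0; have he := ge0_RC (ltW e0); rewrite he; rewrite he ltcR in e0.
set a := complex.Re e in e0 *.
exists (Num.bound a^-1).
rewrite -(rmorph_nat (real_complex R)) -fmorphV ltcR.
rewrite invf_plt ?posrE ?ltr0Sn //.
apply: (lt_trans (archi_boundP _)); first by rewrite invr_ge0 ltW.
by rewrite ltr_nat.
Qed.

Lemma infC (P : H -> Prop) (x : H) : P 0 ->
  exists d : C, [/\ 0 <= d, (forall k, P k -> d <= ip (x - k) (x - k)) &
    (forall e, 0 < e -> exists k, P k /\ ip (x - k) (x - k) < d + e)].
Proof.
move=> P0.
pose E : set R := fun r => exists k, P k /\ ip (x - k) (x - k) = (r%:C)%C.
have Ene : nonempty E.
  by exists (complex.Re (ip (x - 0) (x - 0))), 0; split => //; rewrite -ge0_RC ?ip_ge0.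
have Elb : lbound E 0.
  by move=> r [k [_ hk]]; rewrite -lecR -hk ip_ge0.
have Ehl : has_lbound E by exists 0.
have Ehi : has_inf E by split.
exists ((inf E)%:C)%C; split.
- by rewrite lecR; apply: lb_le_inf.
- move=> k Pk; rewrite (ge0_RC (ip_ge0 (x - k))) lecR.
  by apply: (ge_inf Ehl); exists k; split => //; rewrite -ge0_RC ?ip_ge0.
- move=> e e0; have he := ge0_RC (ltW e0); rewrite he; rewrite he ltcR in e0.
  have [r [k [Pk hk]] hr] := inf_adherent e0 Ehi.
  by exists k; split => //; rewrite hk -rmorphD ltcR.
Qed.

End Basic.

Section Proj.
Variable R : realType.
Local Notation C := (R[i]).
Variable H : lmodType C.
Variable ip : H -> H -> C.
Hypothesis hH : is_hilbert ip.
Variable W : {linear H -> H}.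
Hypothesis hWb : in_BH ip W.

Lemma Kclosed (u : nat -> H) l : (forall n, W (u n) = 0) ->
  (forall e : C, 0 < e -> exists N : nat, forall n : nat,
     (N <= n)%N -> ip (u n - l) (u n - l) < e) -> W l = 0.
Proof.
move=> hu hl; have [m m0 hm] := bnd_sq hH hWb.
apply: (ip_eq0 hH); apply: small_zero; first exact: ip_ge0.
move=> e e0.
have [N hN] := hl (e / m) (divr_gt0 e0 m0).
have -> : W l = W (l - u N) by rewrite linearB hu subr0.
apply: (le_lt_trans (hm _)); rewrite ip_swapB //.
by have := hN N (leqnn N); rewrite -(ltr_pM2l m0) mulrCA mulfV ?gt_eqF // mulr1.
Qed.

Lemma proj_ex x : exists p, W p = 0 /\ forall k, W k = 0 -> ip (x - p) k = 0.
Proof.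
have [d [d0 dlb dad]] := infC hH (P := fun k => W k = 0) x (linear0 W).
pose eps n := (n.+1%:R : C)^-1.
have eps0 n : 0 < eps n by rewrite invr_gt0 ltr0Sn.
have epsle m n : (n <= m)%N -> eps m <= eps n.
  by move=> hnm; rewrite /eps lef_pV2 ?posrE ?ltr0Sn // ler_nat ltnS.
have [kk hk] := @choice nat H (fun n k => W k = 0 /\ ip (x - k) (x - k) < d + eps n)
   (fun n => dad _ (eps0 n)).
have two0 : (2%:R : C) != 0 by rewrite pnatr_eq0.
have cb : forall m n, ip (kk m - kk n) (kk m - kk n) < 2%:R * eps m + 2%:R * eps n.
  move=> m n.
  pose mid := (2%:R^-1 : C) *: (kk m + kk n).
  have Wmid : W mid = 0 by rewrite linearZ /= linearD (hk m).1 (hk n).1 addr0 scaler0.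
  have hpar := paral hH (x - kk n) (x - kk m).
  have e1 : (x - kk n) + (x - kk m) = 2%:R *: (x - mid).
    rewrite scalerBr scalerA mulfV // scale1r scaler_nat mulr2n opprD addrACA.
    by rewrite [- kk n - _]addrC.
  have e2 : (x - kk n) - (x - kk m) = kk m - kk n.
    by rewrite opprB addrC addrA subrK.
  rewrite e1 e2 ipZZ // in hpar.
  have hmid := dlb _ Wmid.
  have : ip (kk m - kk n) (kk m - kk n) =
     2%:R * ip (x - kk n) (x - kk n) + 2%:R * ip (x - kk m) (x - kk m)
     - 2%:R * 2%:R^* * ip (x - mid) (x - mid).
    by rewrite -hpar [_ + ip (kk m - kk n) _]addrC addrK.
  move=> ->; rewrite rmorph_nat.
  have hA := (hk m).2; have hB := (hk n).2.
  have -> : 2%:R * eps m + 2%:R * eps n =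
     2%:R * (d + eps n) + 2%:R * (d + eps m) - 2%:R * 2%:R * d by ring.
  rewrite ltr_leD //; last by rewrite lerN2 ler_wpM2l // mulr_ge0 ?ler0n.
  by rewrite ltrD // ltr_pM2l ?ltr0n.
have [p hp] : exists l : H, forall e : C, 0 < e -> exists N : nat, forall n : nat,
     (N <= n)%N -> ip (kk n - l) (kk n - l) < e.
  apply: complete' => // e e0.
  have e4 : 0 < e / 4%:R by rewrite divr_gt0 ?ltr0n.
  have [N hN] := archiC e4.
  exists N => m n hm hn.
  apply: (lt_le_trans (cb m n)).
  have -> : e = 2%:R * (e / 4%:R) + 2%:R * (e / 4%:R).
    by field.
  by rewrite lerD // ler_wpM2l ?ler0n // ltW // ?(le_lt_trans (epsle _ _ hm) hN) ?(le_lt_trans (epsle _ _ hn) hN).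
have Wp : W p = 0 := Kclosed (fun n => (hk n).1) hp.
have Xd : ip (x - p) (x - p) <= d.
  apply: le_small; first by apply: realB; [exact: ip_real | exact: ger0_real].
  move=> e e0.
  pose D := sqrtC (d + 1).
  have D0 : 0 <= D by rewrite sqrtC_ge0 addr_ge0.
  have h3n : (3%:R : C) != 0 by rewrite pnatr_eq0.
  have D1 : 0 < 2%:R * D + 1 by rewrite ltr_wpDl ?mulr_ge0 ?ler0n.
  pose eta := e / (3%:R * (2%:R * D + 1)).
  have eta0 : 0 < eta by rewrite divr_gt0 // mulr_gt0 ?ltr0n.
  have e3 : 0 < e / 3%:R by rewrite divr_gt0 ?ltr0n.
  have [N1 hN1] := hp _ e3.
  have [N2 hN2] := hp _ (exprn_gt0 2 eta0).
  have [N3 hN3] := archiC e3.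
  pose n := maxn N1 (maxn N2 N3).
  have hn1 : (N1 <= n)%N by rewrite leq_maxl.
  have hn2 : (N2 <= n)%N by rewrite /n (leq_trans (leq_maxl N2 N3)) ?leq_maxr.
  have hn3 : (N3 <= n)%N by rewrite /n (leq_trans (leq_maxr N2 N3)) ?leq_maxr.
  have -> : x - p = (x - kk n) + (kk n - p) by rewrite addrA subrK.
  apply: (le_lt_trans (ip_tri hH _ _)).
  have hA : ip (x - kk n) (x - kk n) < d + e / 3%:R.
    apply: (lt_le_trans (hk n).2); rewrite lerD2l.
    exact: ltW (le_lt_trans (epsle _ _ hn3) hN3).
  have hA1 : ip (x - kk n) (x - kk n) <= D ^+ 2.
    rewrite /D sqrtCK; apply: ltW; apply: (lt_le_trans (hk n).2); rewrite lerD2l.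
    apply: (le_trans (epsle _ _ (leq0n n))).
    by rewrite /eps invr_le1 ?ler1n ?unitfE ?pnatr_eq0 ?ltr0Sn.
  have hB : ip (kk n - p) (kk n - p) < e / 3%:R := hN1 n hn1.
  have hb : hnorm ip (kk n - p) < eta by rewrite hn_lt // hN2.
  have ha : hnorm ip (x - kk n) <= D by rewrite hn_le.
  have h23 : 2%:R * (hnorm ip (x - kk n) * hnorm ip (kk n - p)) <= e / 3%:R.
    apply: (le_trans (y := 2%:R * (D * eta))).
      rewrite ler_wpM2l ?ler0n // ler_pM ?hnorm_ge0 //; exact: ltW.
    have -> : e / 3%:R = 2%:R * (D * eta) + eta.
      by rewrite /eta; field; rewrite gt_eqF.
    by rewrite lerDl ltW.
  have -> : d + e = (d + e / 3%:R) + e / 3%:R + e / 3%:R by field.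
  by rewrite ltr_leD // ltrD.
exists p; split => // k Wk.
set y := x - p.
have key : forall c : C, 0 <= c^* * ip y k + c * ip k y + c * c^* * ip k k.
  move=> c.
  have Wpc : W (p - c *: k) = 0 by rewrite linearB linearZ /= Wk scaler0 subr0.
  have := le_trans Xd (dlb _ Wpc).
  have -> : x - (p - c *: k) = y + c *: k by rewrite /y opprB addrA addrAC.
  rewrite ip_expand // -!addrA lerDl addrA //.
have e1 : ip k y + ip y k = 0.
  apply: (@quad_zero _ _ (ip k k)); first exact: ip_ge0.
  move=> r hr; have := key r; rewrite (conj_Creal hr).
  by congr (0 <= _); rewrite expr2; ring.
have e2 : 'i * ip y k - 'i * ip k y = 0.
  apply: (@quad_zero _ _ (ip k k)); first exact: ip_ge0.
  move=> r hr; have := key (r * - 'i).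
  have -> : (r * - 'i)^* = r * 'i by rewrite rmorphM rmorphN /= conjCi opprK (conj_Creal hr).
  have ii : 'i * 'i = -1 :> C by rewrite -expr2 sqrCi.
  have -> : r * - 'i * (r * 'i) = r ^+ 2 * - ('i * 'i) by rewrite expr2; ring.
  rewrite ii opprK mulr1.
  by congr (0 <= _); ring.
exact: (polar_zero e1 e2).
Qed.

End Proj.

Section Ops.
Variable R : realType.
Local Notation C := (R[i]).
Variable H : lmodType C.

Definition compf (T S : H -> H) (x : H) := T (S x).
Lemma compf_lin (T S : {linear H -> H}) : linear (compf T S).
Proof. by move=> a x y; rewrite /compf !linearP. Qed.
HB.instance Definition _ (T S : {linear H -> H}) := GRing.isLinear.Build C H H *:%R (compf T S) (compf_lin T S).

Definition scf (c : C) (S : H -> H) (x : H) := c *: S x.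
Lemma scf_lin c (S : {linear H -> H}) : linear (scf c S).
Proof. by move=> a x y; rewrite /scf linearP scalerDr !scalerA mulrC. Qed.
HB.instance Definition _ c (S : {linear H -> H}) := GRing.isLinear.Build C H H *:%R (scf c S) (scf_lin c S).

Definition idf (x : H) := x.
Lemma idf_lin : linear idf.
Proof. by []. Qed.
HB.instance Definition _ := GRing.isLinear.Build C H H *:%R idf idf_lin.

Variable ip : H -> H -> C.
Hypothesis hH : is_hilbert ip.
Variable W : {linear H -> H}.
Hypothesis hWb : in_BH ip W.

Definition Pk (x : H) : H := proj1_sig (cid (proj_ex hH hWb x)).

Lemma Pk_spec x : W (Pk x) = 0 /\ forall k, W k = 0 -> ip (x - Pk x) k = 0.
Proof. by rewrite /Pk; case: cid. Qed.

Lemma proj_uniq x p : W p = 0 -> (forall k, W k = 0 -> ip (x - p) k = 0) -> p = Pk x.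
Proof.
move=> Wp hp; have [WP hP] := Pk_spec x.
apply/eqP; rewrite -subr_eq0; apply/eqP; apply: (ip_eq0 hH).
have Wd : W (p - Pk x) = 0 by rewrite linearB Wp WP subr0.
have e : p - Pk x = (x - Pk x) - (x - p) by rewrite opprB [RHS]addrC addrA subrK.
by rewrite [X in ip X _]e ipBl // hP // hp // subr0.
Qed.

Lemma Pk_lin : linear Pk.
Proof.
move=> a x y; apply/esym/proj_uniq.
  by rewrite linearD linearZ /= (Pk_spec x).1 (Pk_spec y).1 scaler0 addr0.
move=> k Wk.
have -> : a *: x + y - (a *: Pk x + Pk y) = a *: (x - Pk x) + (y - Pk y).
  by rewrite scalerBr opprD addrACA.
by rewrite ip_lin // (Pk_spec x).2 // (Pk_spec y).2 // mulr0 addr0.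
Qed.
HB.instance Definition _ := GRing.isLinear.Build C H H *:%R Pk Pk_lin.

Definition Qf (x : H) := x - Pk x.
Lemma Qf_lin : linear Qf.
Proof. by move=> a x y; rewrite /Qf linearP /= scalerBr opprD addrACA. Qed.
HB.instance Definition _ := GRing.isLinear.Build C H H *:%R Qf Qf_lin.

Lemma WPk x : W (Pk x) = 0. Proof. exact: (Pk_spec x).1. Qed.
Lemma Qf_orth x k : W k = 0 -> ip (Qf x) k = 0. Proof. exact: (Pk_spec x).2. Qed.
Lemma Qf_orth' x k : W k = 0 -> ip k (Qf x) = 0.
Proof. by move=> Wk; rewrite (ipC hH) Qf_orth // conjC0. Qed.
Lemma QPk x : Qf x + Pk x = x. Proof. by rewrite /Qf subrK. Qed.
Lemma PkK k : W k = 0 -> Pk k = k.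
Proof. by move=> Wk; apply/esym/proj_uniq => // k' _; rewrite subrr ip0l. Qed.
Lemma PkQ x : Pk (Qf x) = 0.
Proof.
apply/esym/proj_uniq; first exact: linear0.
by move=> k Wk; rewrite subr0 Qf_orth.
Qed.
Lemma QfPk x : Qf (Pk x) = 0.
Proof. by rewrite /Qf (PkK (WPk x)) subrr. Qed.
Lemma WQf x : W (Qf x) = W x.
Proof. by rewrite /Qf linearB WPk subr0. Qed.

Lemma ipQ f : ip (Qf f) f = ip (Qf f) (Qf f).
Proof. by rewrite -{2}(QPk f) ipDr // (Qf_orth f (WPk f)) addr0. Qed.
Lemma ipP f : ip (Pk f) f = ip (Pk f) (Pk f).
Proof. by rewrite -{2}(QPk f) ipDr // (Qf_orth' f (WPk f)) add0r. Qed.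
Lemma pyth f : ip f f = ip (Qf f) (Qf f) + ip (Pk f) (Pk f).
Proof.
by rewrite -{1}(QPk f) ipDl // ipQ ipP.
Qed.
Lemma ipQ_le f : ip (Qf f) (Qf f) <= ip f f.
Proof. by rewrite (pyth f) lerDl ip_ge0. Qed.
Lemma ipP_le f : ip (Pk f) (Pk f) <= ip f f.
Proof. by rewrite (pyth f) lerDr ip_ge0. Qed.


Lemma sqrtC_sq (m : C) : 0 <= m -> sqrtC (m ^+ 2) = m.
Proof.
move=> m0; apply: (pexpIrn (n := 2)) => //; rewrite ?nnegrE ?sqrtC_ge0 ?exprn_ge0 //.
by rewrite sqrtCK.
Qed.

Lemma Ml_part (T P : {linear H -> H}) : in_BH ip T ->
  (forall f, ip (P f) f = ip (P f) (P f)) ->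
  (forall f, ip (P f) (P f) <= ip f f) ->
  exists m : C, [/\ 0 <= m, in_BH ip (compf T P) & in_Ml ip (compf T P) (scf (m ^+ 2) P)].
Proof.
move=> hT h1 h2.
have [m m0 hm] := bnd_abs hH hT.
have hPi f : hnorm ip (P f) <= hnorm ip f.
  by rewrite hn_le ?hnorm_ge0 // hnormK h2.
have m2r : (m ^+ 2)^* = m ^+ 2 by rewrite conj_Creal // ger0_real ?exprn_ge0.
exists m; split => //.
  by exists m => f; rewrite /compf; apply: (le_trans (hm _)); rewrite ler_wpM2l.
split.
- exists (m ^+ 2) => f; rewrite /scf.
  rewrite hn_le ?mulr_ge0 ?exprn_ge0 ?hnorm_ge0 // ipZZ // m2r exprMn hnormK -expr2.
  by rewrite ler_wpM2l ?exprn_ge0.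
- by move=> f; rewrite /scf ipZl // h1 mulr_ge0 ?exprn_ge0 ?ip_ge0.
- exists (idf : {linear H -> H}); split.
  + by exists 1 => f; rewrite mul1r.
  + by move=> f; exact: ip_ge0.
  + move=> f g; rewrite /compf /scf /idf ipZl // h1 sqrtCM ?nnegrE ?exprn_ge0 ?ip_ge0 //.
    rewrite sqrtC_sq //.
    apply: (le_trans (CS hH _ _)); rewrite ler_wpM2r ?hnorm_ge0 //.
    exact: hm.
Qed.

Lemma Sparal (S : {linear H -> H}) a b :
  ip (S (a + b)) (a + b) + ip (S (a - b)) (a - b) = 2%:R * ip (S a) a + 2%:R * ip (S b) b.
Proof.
rewrite linearD linearB !(ipDl hH) !(ipDr hH) !(ipNl hH) !(ipNr hH); ring.
Qed.

Lemma absQ (c : C) : 0 <= c -> nonneg_op ip W -> abs_cont ip W (scf c (Qf)).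
Proof.
move=> c0 hWn f h1 h2.
have E v : ip (scf c (Qf) v) v = c * ip (Qf v) (Qf v).
  by rewrite /scf (ipZl hH) ipQ.
have [c00|cn0] := eqVneq c 0.
  by move=> e e0; exists 0%N => n _; rewrite E c00 mul0r normr0.
have cp : 0 < c by rewrite lt_def cn0 c0.
pose q n := Qf (f n).
have hc : forall e : C, 0 < e -> exists N : nat, forall m n : nat,
     (N <= m)%N -> (N <= n)%N -> ip (q m - q n) (q m - q n) < e.
  move=> e e0; have [N hN] := h2 (c * e) (mulr_gt0 cp e0); exists N => m n hm hn.
  have := hN m n hm hn; rewrite E linearB /= ger0_norm ?mulr_ge0 ?ip_ge0 //.
  by rewrite ltr_pM2l.
have [y hy] := complete' hH hc.
have [mw mw0 hmw] := bnd_abs hH hWb.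
have Wform v : ip (W v) v <= mw * ip v v.
  apply: (le_trans (real_ler_norm (ger0_real (hWn v)))).
  apply: (le_trans (CS hH _ _)); rewrite -hnormK expr2 mulrA ler_wpM2r ?hnorm_ge0 //.
have WQform n : ip (W (q n)) (q n) = ip (W (f n)) (f n).
  rewrite /q WQf.
  have e : ip (W (f n)) (f n) = ip (W (f n)) (Qf (f n) + Pk (f n)).
    by rewrite QPk.
  by rewrite e (ipDr hH) (selfadj hH hWn (f n) (Pk (f n))) (WPk (f n)) (ip0r hH) addr0.
have Wy : W y = 0.
  apply: (nullvec hH hWn); apply: small_zero => [|e e0]; first exact: hWn y.
  have e4 : 0 < e / 4%:R by rewrite divr_gt0 ?ltr0n.
  have [N1 hN1] := h1 _ e4.
  have mw1 : 0 < mw + 1 by rewrite ltr_wpDl.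
  have e'0 : 0 < e / 4%:R / (mw + 1) by rewrite divr_gt0.
  have [N2 hN2] := hy _ e'0.
  pose n := maxn N1 N2.
  have A : ip (W (q n)) (q n) < e / 4%:R.
    by rewrite WQform -(ger0_norm (hWn (f n))) hN1 // leq_maxl.
  have B : ip (W (y - q n)) (y - q n) < e / 4%:R.
    apply: (le_lt_trans (Wform _)); apply: (le_lt_trans (y := (mw + 1) * ip (y - q n) (y - q n))).
      by rewrite ler_wpM2r ?ip_ge0 // lerDl.
    have := hN2 n (leq_maxr _ _).
    by rewrite (ip_swapB hH) -(ltr_pM2l mw1) mulrCA mulfV ?gt_eqF // mulr1.
  have hp := Sparal W (q n) (y - q n).
  rewrite [q n + _]addrC subrK in hp.
  have : ip (W y) y <= 2%:R * ip (W (q n)) (q n) + 2%:R * ip (W (y - q n)) (y - q n).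
    by rewrite -hp lerDl hWn.
  move/le_lt_trans; apply.
  have -> : e = 2%:R * (e / 4%:R) + 2%:R * (e / 4%:R) by field.
  by rewrite ltrD // ltr_pM2l ?ltr0n.
have y0 : y = 0.
  apply: (ip_eq0 hH); apply: small_zero => [|e e0]; first exact: ip_ge0.
  pose h := hnorm ip y.
  have h1p : 0 < h + 1 by rewrite ltr_wpDl ?hnorm_ge0.
  pose eta := e / (h + 1).
  have eta0 : 0 < eta by rewrite divr_gt0.
  have [N hN] := hy _ (exprn_gt0 2 eta0).
  have hb : hnorm ip (y - q N) < eta by rewrite (hn_lt hH) // (ip_swapB hH) hN.
  have eq1 : ip y y = ip (y - q N) y by rewrite (ipBl hH) Qf_orth // subr0.
  rewrite -(ger0_norm (ip_ge0 hH y)) eq1.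
  apply: (le_lt_trans (CS hH _ _)).
  apply: (le_lt_trans (ler_wpM2r (hnorm_ge0 hH y) (ltW hb))).
  have -> : e = eta * h + eta by rewrite /eta; field; rewrite gt_eqF.
  by rewrite ltrDl.
move=> e e0; have [N hN] := hy (e / c) (divr_gt0 e0 cp); exists N => n hn.
rewrite E ger0_norm ?mulr_ge0 ?ip_ge0 //.
have := hN n hn; rewrite y0 subr0 -(ltr_pM2l cp) mulrCA mulfV ?gt_eqF // mulr1.
by [].
Qed.

Lemma singP (c : C) : singular ip W (scf c (Pk)).
Proof.
move=> Q _ hQn hQS hQW f.
have z1 : Q (Pk f) = 0.
  apply: (nullvec hH hQn); apply/le_anti/andP; split; last exact: hQn.
  by apply: (le_trans (hQW _)); rewrite (WPk f) (ip0l hH).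
have z2 : Q (Qf f) = 0.
  apply: (nullvec hH hQn); apply/le_anti/andP; split; last exact: hQn.
  apply: (le_trans (hQS _)); change (ip (c *: Pk (Qf f)) (Qf f) <= 0).
  by rewrite (PkQ f) scaler0 (ip0l hH).
by rewrite -(QPk f) linearD /= z1 z2 addr0.
Qed.

End Ops.

Theorem mainTheorem4 (R : realType) (H : lmodType R[i]) (ip : H -> H -> R[i])
    (hH : is_hilbert ip) (T W : {linear H -> H}) :
  in_BH ip T -> in_BH ip W -> nonneg_op ip W ->
  exists Tlr Tls : {linear H -> H},
    [/\ in_BH ip Tlr, in_BH ip Tls,
        (forall f : H, T f = Tlr f + Tls f),
        left_regular ip W Tlr &
        left_strongly_singular ip W Tls].
Proof.
move=> hT hW hWn.
have [m1 [m10 b1 M1]] := Ml_part hH (P := Qf hH hW) hT (ipQ hH hW) (ipQ_le hH hW).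
have [m2 [m20 b2 M2]] := Ml_part hH (P := Pk hH hW) hT (ipP hH hW) (ipP_le hH hW).
exists (compf T (Qf hH hW)), (compf T (Pk hH hW)); split => //.
- by move=> f; rewrite -{1}(QPk hH hW f) linearD.
- exists (scf (m1 ^+ 2) (Qf hH hW)); split => //.
  by apply: absQ => //; rewrite exprn_ge0.
- by exists (scf (m2 ^+ 2) (Pk hH hW)); split => //; apply: singP.
Qed.
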